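(* For positive integers $n$ and $k$, $C_{-2n}^{(2k-1)}$ equals the number of integer sequences $a_1\le a_2\ge a_3\le a_4\ge\cdots\ge a_{2n-1}$ with $1\le a_i\le k$ for all $i$.
   Context: For $N\ge0$, $C_N^{(K)}$ is the number of lattice paths with steps $(1,1),(1,-1)$ from $(0,0)$ to $(N,0)$ never going below the $x$-axis nor above $y=K$. For odd $K$ the generating function $F(x)=\sum_{N\ge0}C_N^{(K)}x^N$ is a rational function $p/q$ with $\deg p<\deg q$, $q(0)\neq0$; values at negative indices are defined by extending the linear recurrence backwards, equivalently $\sum_{N\ge1}C_{-N}^{(K)}x^N=-F(1/x)$. *)

(* Defs.v *)
From HB Require Import structures.
From mathcomp Require Import all_boot all_order all_algebra.
Set Implicit Arguments. Unset Strict Implicit. Unset Printing Implicit Defensive.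
Import Order.TTheory GRing.Theory Num.Theory.
Local Open Scope ring_scope.

(* A lattice path with steps (1,1),(1,-1) of length N is a sequence of N
   booleans (true = up step (1,1), false = down step (1,-1)). *)
Definition step (b : bool) : int := if b then 1 else -1.

Definition height (s : seq bool) : int := \sum_(b <- s) step b.

Definition bounded_path (K : nat) (s : seq bool) : bool :=
  [forall i : 'I_(size s).+1,
     (0 <= height (take i s)) && (height (take i s) <= K%:Z)]
  && (height s == 0).

Definition C (K N : nat) : nat :=
  #|[set t : N.-tuple bool | bounded_path K t]|.

(* q is a denominator as in the paper: F = p/q with q(0) <> 0 and
   deg p < deg q, i.e. the coefficients of q * F vanish in degrees
   N >= deg q (then p is the truncation of q*F). *)
Definition is_denominator (K : nat) (q : {poly rat}) : Prop :=
  q`_0 != 0 /\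
  forall N : nat, ((size q).-1 <= N)%N ->
    \sum_(j < size q) q`_j * (C K (N - j)%N)%:R = 0.

(* c : int -> rat is the extension of (C_N^{(K)})_{N>=0} to all integer
   indices obtained by extending the linear recurrence given by a
   denominator q backwards (the recurrence is required at every index). *)
Definition extends_C (K : nat) (c : int -> rat) : Prop :=
  (forall N : nat, c N%:Z = (C K N)%:R) /\
  exists q : {poly rat}, is_denominator K q /\
    forall N : int, \sum_(j < size q) q`_j * c (N - j%:Z) = 0.

(* number of integer sequences a_1 <= a_2 >= a_3 <= a_4 >= ... a_{2n-1}
   with 1 <= a_i <= k.  f i : 'I_k stands for a_{i+1} - 1 (0-based). *)
Definition count_alt (n k : nat) : nat :=
  #|[set f : {ffun 'I_(2 * n - 1) -> 'I_k} |
      [forall i : 'I_(2 * n - 1), forall j : 'I_(2 * n - 1),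
         (nat_of_ord j == i.+1)%N ==>
           (if odd i then (f j <= f i)%N else (f i <= f j)%N)]]|.

(* Main.v *)
Require Import Defs.
From HB Require Import structures.
From mathcomp Require Import all_boot all_order all_algebra.
From mathcomp Require Import zify ring.
Set Implicit Arguments. Unset Strict Implicit. Unset Printing Implicit Defensive.
Import Order.TTheory GRing.Theory Num.Theory.

Lemma card_set_sum (T : finType) (P : pred T) :
  #|[set x | P x]| = \sum_(x : T) (P x : nat).
Proof.
by rewrite -sum1_card big_mkcond /=; apply: eq_bigr => x _; rewrite inE; case: (P x).
Qed.

Lemma tuple_split (T : finType) (N : nat) (P : seq T -> bool) :
  #|[set t : N.+1.-tuple T | P t]| =
  \sum_(x : T) #|[set t : N.-tuple T | P (x :: t)]|.
Proof.
rewrite card_set_sum.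
rewrite (eq_bigr (fun x => \sum_(t : N.-tuple T) (P (x :: t) : nat))); last first.
  by move=> x _; rewrite (card_set_sum (fun t : N.-tuple T => P (x :: t))).
rewrite pair_big /=.
rewrite (reindex (fun p : T * N.-tuple T => [tuple of p.1 :: p.2])) /=.
  by apply: eq_bigr => -[x t].
exists (fun t : N.+1.-tuple T => (thead t, [tuple of behead t])).
  move=> [x t] _ /=; congr pair; exact: val_inj.
by move=> t _ /=; rewrite [in RHS](tuple_eta t).
Qed.

Lemma tuple_split0 (T : finType) (P : seq T -> bool) :
  #|[set t : 0.-tuple T | P t]| = P [::].
Proof.
rewrite (card_set_sum (fun t : 0.-tuple T => P t)) (big_pred1 [tuple]).
  by rewrite /=.
by move=> t; rewrite /= [t]tuple0; apply/esym/eqP.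
Qed.
Lemma forall_iota n (P : nat -> bool) :
  [forall i : 'I_n, P i] = all P (iota 0 n).
Proof.
apply/forallP/allP => H i.
  by rewrite mem_iota /= add0n => lt; exact: (H (Ordinal lt)).
by apply: H; rewrite mem_iota /= add0n ltn_ord.
Qed.

Lemma all_iotaS (P : nat -> bool) n m :
  all P (iota m n.+1) = P m && all (fun i => P i.+1) (iota m n).
Proof.
elim: n m => [|n IH] m; first by rewrite /= !andbT.
by move: (IH m.+1) => /= ->.
Qed.

Fixpoint bpn (K h : nat) (s : seq bool) : bool :=
  match s with
  | [::] => h == 0
  | b :: s' => (h <= K) && (if b then bpn K h.+1 s' else (0 < h) && bpn K h.-1 s')
  end.

Lemma height_cons b s : height (b :: s) = (step b + height s)%R.
Proof. by rewrite /height big_cons. Qed.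

Lemma height_nil : height [::] = 0%R.
Proof. by rewrite /height big_nil. Qed.

Local Open Scope ring_scope.

Definition Lp (K : nat) (h : int) (s : seq bool) : bool :=
  all (fun i => (0 <= h + height (take i s)) && (h + height (take i s) <= K%:Z))
      (iota 0 (size s).+1) && (h + height s == 0).

Lemma Lp_cons K h b s :
  Lp K h (b :: s) = (0 <= h) && (h <= K%:Z) && Lp K (h + step b) s.
Proof.
rewrite /Lp [size _]/= all_iotaS take0 height_nil addr0.
under eq_all => i do rewrite [take _ _]/= height_cons addrA.
by rewrite height_cons addrA !andbA.
Qed.

Lemma Lp_nil K h : Lp K h [::] = (h == 0).
Proof.
rewrite /Lp /= height_nil addr0 andbT.
by apply/idP/idP => [/andP[_ ->]//|/eqP -> /=]; done.
Qed.

Lemma Lp_bpn K s (h : nat) : Lp K h%:Z s = bpn K h s.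
Proof.
elim: s h => [|b s IH] h; first by rewrite Lp_nil.
rewrite Lp_cons [bpn _ _ _]/=.
have -> : (0 <= h%:Z) && (h%:Z <= K%:Z) = (h <= K)%N by rewrite lez_nat.
congr andb; case: b.
  by rewrite -IH /step; congr Lp; lia.
case: h => [|h].
  rewrite /= /step add0r /Lp all_iotaS /=.
  by rewrite take0 height_nil addr0.
by rewrite -IH /step; congr Lp; lia.
Qed.

Lemma bounded_bpn K s : bounded_path K s = bpn K 0 s.
Proof.
rewrite -Lp_bpn /bounded_path /Lp (forall_iota _ (fun i => (0 <= height (take i s)) &&
        (height (take i s) <= K%:Z))).
have E : forall x : int, Posz 0 + x = x by move=> x; rewrite add0r.
by rewrite E; congr andb; apply: eq_all => i; rewrite E.
Qed.

Local Close Scope ring_scope.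

Lemma card_andb (T : finType) (c : bool) (Q : pred T) :
  #|[set t | c && Q t]| = c * #|[set t | Q t]|.
Proof.
case: c; first by rewrite mul1n; apply: eq_card => t; rewrite !inE.
by rewrite mul0n; apply/eqP; rewrite cards_eq0; apply/eqP/setP => t; rewrite !inE.
Qed.

Fixpoint Dn (K N h : nat) : nat :=
  match N with
  | 0 => (h == 0 : nat)
  | N'.+1 => (h <= K) * (Dn K N' h.+1 + (0 < h) * Dn K N' h.-1)
  end.

Lemma card_bpn K N h : #|[set t : N.-tuple bool | bpn K h t]| = Dn K N h.
Proof.
elim: N h => [|N IH] h; first by rewrite (tuple_split0 (bpn K h)).
rewrite (tuple_split N (bpn K h)) big_bool /=.
rewrite (card_andb _ (fun t : N.-tuple bool => if true then bpn K h.+1 t else (0 < h) && bpn K h.-1 t)).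
rewrite (card_andb _ (fun t : N.-tuple bool => if false then bpn K h.+1 t else (0 < h) && bpn K h.-1 t)).
rewrite /= (card_andb _ (fun t : N.-tuple bool => bpn K h.-1 t)) !IH.
by rewrite mulnDr.
Qed.

Lemma C_Dn K N : C K N = Dn K N 0.
Proof.
rewrite /C -card_bpn; apply: eq_card => t; rewrite !inE bounded_bpn //.
Qed.

Definition relp (p : bool) (x y : nat) : bool := if p then y <= x else x <= y.

Fixpoint Nw (k : nat) (p : bool) (m x : nat) : nat :=
  match m with
  | 0 => 1
  | m'.+1 => \sum_(y < k) relp p x y * Nw k (~~ p) m' y
  end.

Fixpoint altok (k : nat) (p : bool) (x : nat) (s : seq 'I_k) : bool :=
  match s with
  | [::] => true
  | y :: s' => relp p x y && altok (~~ p) y s'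
  end.

Lemma card_altok k m p x :
  #|[set t : m.-tuple 'I_k | altok p x t]| = Nw k p m x.
Proof.
elim: m p x => [|m IH] p x; first by rewrite (tuple_split0 (altok p x)).
rewrite (tuple_split m (altok p x)) /=; apply: eq_bigr => y _.
by rewrite (card_andb _ (fun t : m.-tuple 'I_k => altok (~~ p) y t)) IH.
Qed.



Lemma iota1S n : iota 1 n = map S (iota 0 n).
Proof. by have := iotaDl 1 0 n; rewrite addn0 => ->. Qed.

Lemma altok_all k (x0 : 'I_k) p (x : 'I_k) (s : seq 'I_k) :
  altok p x s = all (fun i => relp (p (+) odd i) (nth x0 (x :: s) i)
                                 (nth x0 (x :: s) i.+1)) (iota 0 (size s)).
Proof.
elim: s p x => [|y s IH] p x //=.
rewrite IH; congr andb.
  by rewrite addbF.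
rewrite iota1S all_map; apply: eq_all => i /=.
by rewrite addbN addNb.
Qed.

Lemma card_ffun_tuple (T : finType) M (Q : {ffun 'I_M -> T} -> bool) :
  #|[set f | Q f]| = #|[set t : M.-tuple T | Q [ffun i => tnth t i]]|.
Proof.
rewrite !card_set_sum (reindex (fun t : M.-tuple T => [ffun i => tnth t i])) //.
exists (fun f : {ffun 'I_M -> T} => [tuple f i | i < M]).
  by move=> t _; apply: eq_from_tnth => i; rewrite tnth_mktuple ffunE.
by move=> f _; apply/ffunP => i; rewrite ffunE tnth_mktuple.
Qed.

Lemma forall_pairs (T : finType) (x0 : T) M (t : M.-tuple T) (R : nat -> T -> T -> bool) :
  [forall i : 'I_M, forall j : 'I_M, (nat_of_ord j == i.+1) ==> R i (tnth t i) (tnth t j)]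
  = all (fun i => R i (nth x0 t i) (nth x0 t i.+1)) (iota 0 M.-1).
Proof.
apply/forallP/allP.
  move=> H i; rewrite mem_iota add0n /= => lti.
  have l1 : i < M by lia.
  have l2 : i.+1 < M by lia.
  have := forallP (H (Ordinal l1)) (Ordinal l2).
  by rewrite /= eqxx /= !(tnth_nth x0).
move=> H i; apply/forallP => j; apply/implyP => /eqP Hj.
have lj := ltn_ord j.
have := H i; rewrite mem_iota add0n !(tnth_nth x0) Hj.
by apply; lia.
Qed.

Lemma count_Nw k' M m : M = m.+1 ->
  #|[set f : {ffun 'I_M -> 'I_k'.+1} | [forall i : 'I_M, forall j : 'I_M,
         (nat_of_ord j == i.+1) ==>
           (if odd i then (f j <= f i) else (f i <= f j))]]|
  = \sum_(x < k'.+1) Nw k'.+1 false m x.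
Proof.
move=> EM; subst M.
rewrite (card_ffun_tuple (fun f : {ffun 'I_m.+1 -> 'I_k'.+1} =>
  [forall i : 'I_m.+1, forall j : 'I_m.+1,
         (nat_of_ord j == i.+1) ==>
           (if odd i then (f j <= f i) else (f i <= f j))])).
transitivity #|[set t : m.+1.-tuple 'I_k'.+1 | (fun s : seq 'I_k'.+1 =>
   if s is x :: s' then altok false x s' else true) t]|.
  apply: eq_card => t; rewrite !inE.
  under eq_forallb => i do under eq_forallb => j do rewrite !ffunE.
  rewrite (forall_pairs ord0 t (fun i a b => relp (odd i) a b)).
  case: t => -[|x s] //= Hs.
  rewrite (altok_all ord0); have -> : size s = m by move/eqP: Hs => [].
  by apply: eq_all => i.
rewrite (tuple_split m (fun s : seq 'I_k'.+1 => if s is x :: s' then altok false x s' else true)).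
by apply: eq_bigr => x _; rewrite card_altok.
Qed.

Lemma Nw_rev k p m x : x < k -> Nw k p m x = Nw k (~~ p) m (k.-1 - x).
Proof.
elim: m p x => [|m IH] p x ltx //=.
rewrite [RHS](reindex_inj rev_ord_inj) /=; apply: eq_bigr => y _.
have lty := ltn_ord y.
rewrite (IH (~~ p) y lty) !negbK.
have -> : k.-1 - y = k - y.+1 by lia.
congr (_ * _); rewrite /relp; case: p => /=; congr nat_of_bool; apply/idP/idP; lia.
Qed.

Lemma sum_Nw_flip k m :
  \sum_(x < k) Nw k false m x = \sum_(x < k) Nw k true m x.
Proof.
rewrite [RHS](reindex_inj rev_ord_inj) /=; apply: eq_bigr => x _.
rewrite (Nw_rev false m (ltn_ord x)) /=; congr Nw; have := ltn_ord x; lia.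
Qed.
Local Open Scope ring_scope.

Lemma ind_sum n a (G : nat -> rat) :
  \sum_(0 <= j < n) (if a == j then 1 else 0) * G j = if (a < n)%N then G a else 0.
Proof.
elim: n => [|n IH]; first by rewrite big_geq // ltn0.
rewrite big_nat_recr //= IH.
case: (ltngtP a n) => H.
- have -> : (a < n.+1)%N by lia.
  by rewrite mul0r addr0.
- have -> : (a < n.+1)%N = false by lia.
  by rewrite mul0r addr0.
- by subst a; rewrite ltnSn mul1r add0r.
Qed.

Lemma if_and (c b : bool) : (if c && b then 1 else 0 : rat) =
   (if c then 1 else 0) * (if b then 1 else 0).
Proof. by case: c; case: b; rewrite ?mul1r ?mul0r. Qed.

Definition adj (i j : nat) : rat :=
  (if i.+1 == j then 1 else 0) + (if (0 < i)%N && (i.-1 == j) then 1 else 0).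

Lemma adj_sum n i (G : nat -> rat) :
  \sum_(0 <= j < n) adj i j * G j =
  (if (i.+1 < n)%N then G i.+1 else 0) +
  (if (0 < i)%N then (if (i.-1 < n)%N then G i.-1 else 0) else 0).
Proof.
rewrite /adj.
under eq_bigr do rewrite mulrDl if_and -mulrA.
rewrite big_split /= ind_sum -mulr_sumr ind_sum.
by case: (0 < i)%N; rewrite ?mul1r ?mul0r.
Qed.

Definition Amx (K : nat) : 'M[rat]_K.+1 := \matrix_(i, j) adj i j.

Lemma Dn_out K N h : (K < h)%N -> Dn K N h = 0%N.
Proof. by case: N => [|N] /= H; [case: h H|rewrite leqNgt H]. Qed.

Lemma A_pow K N (i : 'I_K.+1) : (Amx K ^+ N) i 0 = (Dn K N i)%:R.
Proof.
elim: N i => [|N IH] i.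
  rewrite expr0 mxE /=; case: (i =P 0) => [->|H] //=.
  by case: (nat_of_ord i =P 0%N) => // H'; case: H; apply: val_inj.
rewrite exprS -mulmxE mxE.
under eq_bigr do rewrite mxE IH.
rewrite -(big_mkord xpredT (fun j => adj i j * (Dn K N j)%:R)) adj_sum /=.
have lti := ltn_ord i.
have -> : (i <= K)%N by lia.
rewrite mul1n natrD.
case: ifP => H1.
  congr (_ + _).
  case: ifP => H2; last by rewrite mul0n.
  by rewrite mul1n; case: ifP => //; lia.
have -> : i.+1 = K.+1 by lia.
rewrite (@Dn_out K N K.+1) // add0r; case: ifP => H2; last by rewrite mul0n.
by rewrite mul1n add0r; case: ifP => //; lia.
Qed.

Definition sgn (i : nat) : rat := if odd i./2 then -1 else 1.

Definition Dmx (K : nat) : 'M[rat]_K.+1 := diag_mx (\row_(i < K.+1) sgn i).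

Lemma Dmx2 K : Dmx K * Dmx K = 1.
Proof.
apply/matrixP => i j; rewrite /Dmx -mulmxE mul_diag_mx !mxE.
case: (i =P j) => [->|_]; last by rewrite mulr0n mulr0.
by rewrite /sgn mulr1n; case: ifP; rewrite ?mulrNN mul1r.
Qed.

Lemma conj_pow K (X : 'M[rat]_K.+1) N :
  (Dmx K * X * Dmx K) ^+ N = Dmx K * X ^+ N * Dmx K.
Proof.
elim: N => [|N IH]; first by rewrite !expr0 mulr1 Dmx2.
rewrite exprS IH !mulrA -(mulrA (Dmx K * X) (Dmx K) (Dmx K)) Dmx2 mulr1.
by rewrite -(mulrA (Dmx K) X (X ^+ N)) -exprS.
Qed.

Lemma conj_entry K (X : 'M[rat]_K.+1) i j :
  (Dmx K * X * Dmx K) i j = sgn i * X i j * sgn j.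
Proof. by rewrite /Dmx -!mulmxE mul_mx_diag mul_diag_mx !mxE. Qed.

Definition bp (i j : nat) : rat :=
  if (~~ odd i) && odd j && (i < j)%N then 1
  else if odd i && ~~ odd j && (j < i)%N then 1 else 0.

Definition Bmx (K : nat) : 'M[rat]_K.+1 := \matrix_(i, j) bp i j.

Definition Apr (K : nat) : 'M[rat]_K.+1 := Dmx K * Amx K * Dmx K.

Lemma AB1 k' : Apr k'.*2.+1 * Bmx k'.*2.+1 = 1.
Proof.
apply/matrixP => i l; rewrite -mulmxE !mxE.
under eq_bigr do rewrite conj_entry !mxE.
set K := k'.*2.+1.
rewrite -(big_mkord xpredT (fun j => sgn i * adj i j * sgn j * bp j l)).
have E : forall j, sgn i * adj i j * sgn j * bp j l = adj i j * (sgn i * sgn j * bp j l).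
  by move=> j; ring.
under eq_bigr do rewrite E.
rewrite adj_sum.
have -> : (i == l) = (nat_of_ord i == l) by [].
have := ltn_ord i; have := ltn_ord l.
move: (nat_of_ord i) (nat_of_ord l) => a b Ha Hb.
rewrite /sgn /bp /K.
have -> : ((a == b)%:R : rat) = if a == b then 1 else 0 by case: (a == b).
by repeat (case: ifP => ?); first [ring | exfalso; lia].
Qed.
Local Open Scope ring_scope.

Definition phi (k m i : nat) : nat :=
  if odd i then (if odd m then 0 else Nw k true m i./2)
  else (if odd m then Nw k false m i./2 else 0).

Lemma sum_double n (F : nat -> rat) :
  \sum_(0 <= j < n.*2) F j = \sum_(0 <= y < n) (F y.*2 + F y.*2.+1).
Proof.
elim: n => [|n IH]; first by rewrite !big_geq.
by rewrite doubleS !big_nat_recr //= IH addrA.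
Qed.

Lemma natb (b : bool) : ((b : nat)%:R : rat) = if b then 1 else 0.
Proof. by case: b. Qed.

Lemma phiS k m i : phi k m.+1 i =
  (\sum_(0 <= y < k) (if odd i then (if odd m then relp true i./2 y * Nw k false m y else 0)
     else (if odd m then 0 else relp false i./2 y * Nw k true m y)))%N.
Proof.
rewrite /phi /=; case: (odd i); case: (odd m) => /=; rewrite ?big_mkord //;
  by rewrite big1.
Qed.

Lemma B_pow k' m (i : 'I_(k'.*2.+2)) :
  (Bmx k'.*2.+1 ^+ m.+1) i 0 = (phi k'.+1 m i)%:R.
Proof.
elim: m i => [|m IH] i.
  rewrite expr1 mxE /bp /phi /=.
  have := ltn_ord i; move: (nat_of_ord i) => a Ha.
  by repeat (case: ifP => ?); first [ring | exfalso; lia].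
rewrite exprS -mulmxE mxE.
under eq_bigr do rewrite mxE IH.
rewrite -(big_mkord xpredT (fun j => bp i j * (phi k'.+1 m j)%:R)).
have := ltn_ord i; move: (nat_of_ord i) => a Ha.
have -> : k'.*2.+2 = (k'.+1).*2 by rewrite doubleS.
rewrite sum_double phiS natr_sum.
apply: eq_big_nat => y Hy.
have h1 : (y.*2)./2 = y by lia.
have h2 : (y.*2.+1)./2 = y by lia.
rewrite /phi /bp /relp h1 h2.
by repeat (case: ifP => ?); rewrite ?natrM ?natb; repeat (case: ifP => ?);
  first [ring | exfalso; lia].
Qed.
Local Open Scope ring_scope.

Definition Lop (q : {poly rat}) (e : int -> rat) (N : int) : rat :=
  \sum_(j < size q) q`_j * e (N - j%:Z).

Lemma Lop_ext q e1 e2 N : (forall M, e1 M = e2 M) -> Lop q e1 N = Lop q e2 N.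
Proof. by move=> H; apply: eq_bigr => j _; rewrite H. Qed.

Lemma Lop_comm q1 q2 e N :
  Lop q1 (Lop q2 e) N = Lop q2 (Lop q1 e) N.
Proof.
rewrite /Lop.
under eq_bigr do rewrite mulr_sumr.
rewrite exchange_big /=; apply: eq_bigr => j _; rewrite mulr_sumr.
apply: eq_bigr => l _; rewrite mulrCA; congr (_ * (_ * e _)); lia.
Qed.

Lemma Lop_sub q e1 e2 N :
  Lop q (fun M => e1 M - e2 M) N = Lop q e1 N - Lop q e2 N.
Proof. by rewrite /Lop -sumrB; apply: eq_bigr => j _; rewrite mulrBr. Qed.

Lemma back_ind (q : {poly rat}) (e : int -> rat) (T : int) :
  q`_0 != 0 -> (forall N, Lop q e N = 0) -> (forall N, T <= N -> e N = 0) ->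
  forall N, e N = 0.
Proof.
move=> q0 Hrec Hge.
have qn0 : q != 0 by apply: contraNneq q0 => ->; rewrite coef0.
have lc : lead_coef q != 0 by rewrite lead_coef_eq0.
set d := (size q).-1.
have Sq : size q = d.+1 by rewrite /d prednK // size_poly_gt0.
suff H : forall m : nat, forall N, T - m%:Z <= N -> e N = 0.
  by move=> N; apply: (H `|T - N|%N); lia.
elim=> [|m IH] N HN; first by apply: Hge; lia.
have [HN'|HN'] := boolP (T - m%:Z <= N); first exact: IH.
have lc' : q`_d != 0 by move: lc; rewrite lead_coefE.
have := Hrec (N + d%:Z); rewrite /Lop Sq big_ord_recr /=.
rewrite big1 ?add0r; last first.
  move=> j _; rewrite IH ?mulr0 //; have := ltn_ord j; lia.
have -> : N + d%:Z - d%:Z = N by lia.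
by move/eqP; rewrite mulf_eq0 (negbTE lc') /= => /eqP.
Qed.

Section Main.
Variable k' : nat.
Notation K := k'.*2.+1.

Definition Pm (N : int) : 'M[rat]_K.+1 :=
  match N with Posz n => Apr K ^+ n | Negz n => Bmx K ^+ n.+1 end.

Lemma BA1 : Bmx K * Apr K = 1.
Proof. by have := AB1 k'; rewrite -!mulmxE => /mulmx1C. Qed.

Lemma Pm_succ a : Pm (a + 1) = Pm a * Apr K.
Proof.
case: a => n.
  have -> : Posz n + 1 = Posz n.+1 by lia.
  by rewrite /= exprSr.
case: n => [|n].
  have -> : Negz 0 + 1 = Posz 0 by lia.
  by rewrite /= expr0 expr1 BA1.
have -> : Negz n.+1 + 1 = Negz n by lia.
by rewrite /= [Bmx K ^+ n.+2]exprSr -mulrA BA1 mulr1.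
Qed.

Lemma Pm_add a (m : nat) : Pm (a + m%:Z) = Pm a * Apr K ^+ m.
Proof.
elim: m => [|m IH]; first by rewrite addr0 expr0 mulr1.
have -> : a + m.+1%:Z = (a + m%:Z) + 1 by lia.
by rewrite Pm_succ IH exprSr mulrA.
Qed.

Notation chi := (char_poly (Apr K)).
Definition qq : {poly rat} := \poly_(j < K.+2) chi`_(K.+1 - j).

Lemma horner_expand : \sum_(i < K.+2) chi`_i *: Apr K ^+ i = 0.
Proof.
transitivity (horner_mx (Apr K) chi); last exact: Cayley_Hamilton.
rewrite -[in RHS](coefK (char_poly (Apr K))) poly_def rmorph_sum size_char_poly.
apply: eq_bigr => i _.
rewrite -[RHS]/(horner_mx (Apr K) ((char_poly (Apr K))`_i *: 'X^i)) horner_mxZ rmorphXn.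
by congr (_ *: _ ^+ _); exact: (esym (horner_mx_X _)).
Qed.

Lemma Pm_rec N : \sum_(j < size qq) qq`_j *: Pm (N - j%:Z) = 0.
Proof.
have szq : (size qq <= K.+2)%N by apply: size_poly.
rewrite (big_ord_widen _ (fun j => qq`_j *: Pm (N - j%:Z)) szq) big_mkcond /=.
transitivity (\sum_(j < K.+2) chi`_(K.+1 - j) *: (Pm (N - K.+1%:Z) * Apr K ^+ (K.+1 - j))).
  apply: eq_bigr => j _.
  have E : qq`_j = chi`_(K.+1 - j) by rewrite coef_poly ltn_ord.
  have Hj := ltn_ord j.
  case: ifP => H.
    rewrite E -Pm_add; congr (_ *: Pm _).
    by rewrite -subzn //; ring.
  by rewrite -E nth_default ?scale0r // leqNgt H.
under eq_bigr do rewrite scalerAr.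
rewrite -mulr_sumr (reindex_inj rev_ord_inj) /=.
transitivity (Pm (N - K.+1%:Z) * \sum_(i < K.+2) chi`_i *: Apr K ^+ i);
  last by rewrite horner_expand mulr0.
congr (_ * _).
apply: eq_bigr => j _; have Hj := ltn_ord j.
by have -> : (K.+1 - (K.+2 - j.+1) = j)%N by lia.
Qed.

Definition c0 (N : int) : rat := Pm N 0 0.

Lemma c0_rec N : Lop qq c0 N = 0.
Proof.
have := congr1 (fun M : 'M[rat]_K.+1 => M 0 0) (Pm_rec N).
rewrite /= summxE mxE => <-; apply: eq_bigr => j _.
by rewrite mxE.
Qed.

Lemma c0_pos n : c0 (Posz n) = (C K n)%:R.
Proof. by rewrite /c0 /= /Apr conj_pow conj_entry A_pow /sgn /= mul1r mulr1 C_Dn. Qed.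

Lemma qq0 : qq`_0 != 0.
Proof.
rewrite coef_poly /= subn0.
have := char_poly_monic (Apr K); rewrite monicE lead_coefE size_char_poly /= => /eqP ->.
exact: oner_neq0.
Qed.

Lemma exist_ext : extends_C K c0.
Proof.
split; first exact: c0_pos.
exists qq; split; last exact: c0_rec.
split; first exact: qq0.
move=> N HN; transitivity (Lop qq c0 N); last exact: c0_rec.
apply: eq_bigr => j _.
have Hj := ltn_ord j.
by rewrite subzn ?c0_pos //; lia.
Qed.

Lemma uniq_ext c : extends_C K c -> forall N, c N = c0 N.
Proof.
move=> [Hpos [q1 [[q10 _] Hrec1]]].
pose dl := fun N => c N - c0 N.
have dl0 : forall N, 0 <= N -> dl N = 0.
  by case=> n // _; rewrite /dl Hpos c0_pos subrr.
have Le : forall N, Lop qq dl N = Lop qq c N.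
  by move=> N; rewrite Lop_sub c0_rec subr0.
have e0 : forall N, Lop qq dl N = 0.
  apply: (@back_ind q1 _ ((size qq).-1)%:Z) => //.
    move=> N; rewrite (@Lop_ext q1 (Lop qq dl) (Lop qq c) _ Le) Lop_comm.
    by rewrite /Lop big1 // => j _; rewrite [X in _ * X]Hrec1 mulr0.
  move=> N HN; rewrite /Lop big1 // => j _; rewrite dl0 ?mulr0 //.
  have := ltn_ord j; lia.
move=> N; have := @back_ind qq dl 0 qq0 e0 dl0 N.
by rewrite /dl => /eqP; rewrite subr_eq0 => /eqP.
Qed.

End Main.

Local Close Scope ring_scope.
Unset Implicit Arguments.

Theorem corollary13 (n k : nat) : (0 < n)%N -> (0 < k)%N ->
  (exists c : int -> rat, extends_C (2 * k - 1) c) /\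
  (forall c : int -> rat, extends_C (2 * k - 1) c ->
     c (- (Posz (2 * n)))%R = ((count_alt n k)%:R)%R).
Proof.
move=> Hn Hk; case: k Hk => [|k'] // _; case: n Hn => [|n'] // _.
have EK : (2 * k'.+1 - 1)%N = k'.*2.+1 by lia.
rewrite EK; split; first by exists (c0 k'); exact: exist_ext.
move=> c Hc; rewrite (uniq_ext Hc).
have -> : (- Posz (2 * n'.+1))%R = Negz (n'.*2.+1).
  by rewrite NegzE; congr (- Posz _)%R; lia.
rewrite /c0 /Pm.
rewrite B_pow /phi /= odd_double /=.
rewrite /count_alt (@count_Nw k' (2 * n'.+1 - 1) n'.*2); last by lia.
rewrite sum_Nw_flip; congr (GRing.natmul _ _).
by apply: eq_bigr => y _; rewrite mul1n.
Qed.
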